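(* Let $(X,d)$, $T$, $c$, $l$, $\alpha$ and $\rho$ be as follows: $(X,d)$ is a compact metric space, $T:\mathbb{Z}^k\times X\to X$ a continuous action, $c>0$ such that distinct $x,y$ satisfy $\sup_{u\in\mathbb{Z}^k}d(T^ux,T^uy)>c$, $l>0$ an integer such that $d(x,y)\geq c/2$ implies $d(T^ux,T^uy)\geq c$ for some $|u|\leq l$, $\alpha>1$ with $\alpha^l<2$, $\mathbf{n}(x,y)=\min\{n\geq0:\exists u\in\mathbb{Z}^k,|u|\leq n, d(T^ux,T^uy)\geq c\}$ ($=\infty$ if $x=y$), $\rho(x,y)=\alpha^{-\mathbf{n}(x,y)}$. Let $D$ be a distance function on $X$ with $\rho(x,y)/4\leq D(x,y)\leq\rho(x,y)$ for all $x,y$. If $n\geq1$ and $x,y\in X$ satisfy $\max_{u\in\mathbb{Z}^k,|u|<n}D(T^ux,T^uy)<1/(4\alpha)$, then $D(x,y)<\alpha^{-n}$.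
   Context: $|u|$ denotes the norm of $u\in\mathbb{Z}^k$ (a fixed norm, e.g. Euclidean). *)

(* Defs.v *)
From HB Require Import structures.
From mathcomp Require Import all_boot all_order all_algebra.
From mathcomp Require Import all_classical all_reals all_analysis.
Set Implicit Arguments. Unset Strict Implicit. Unset Printing Implicit Defensive.
Import Order.TTheory GRing.Theory Num.Theory.
Local Open Scope ring_scope.

Definition znorm (R : realType) (k : nat) (u : 'rV[int]_k) : R :=
  Num.sqrt (\sum_(i < k) ((u ord0 i)%:~R) ^+ 2).

Definition is_cont_action (R : realType) (X : metricType R) (k : nat)
  (T : 'rV[int]_k -> X -> X) : Prop :=
  (forall x, T 0 x = x) /\
  (forall u v x, T (u + v) x = T u (T v x)) /\
  (forall u, continuous (T u)).

Definition is_distance (X : Type) (R : realType) (D : X -> X -> R) : Prop :=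
  (forall x y, 0 <= D x y) /\ (forall x y, D x y = 0 <-> x = y) /\
  (forall x y, D x y = D y x) /\ (forall x y z, D x z <= D x y + D y z).

Definition sep_at (R : realType) (X : metricType R) (k : nat)
  (T : 'rV[int]_k -> X -> X) (c : R) (x y : X) (n : nat) : Prop :=
  exists u : 'rV[int]_k, znorm R u <= n%:R /\ c <= mdist (T u x) (T u y).

(* rho(x,y) = alpha^(-n(x,y)), with n(x,y) = min{n | sep_at n}, and
   rho = alpha^(-oo) = 0 when no such n exists (e.g. x = y). *)
Definition rho (R : realType) (X : metricType R) (k : nat)
  (T : 'rV[int]_k -> X -> X) (c alpha : R) (x y : X) : R :=
  match pselect (exists n, sep_at T c x y n) with
  | left h => alpha ^- (ex_minn (P := fun n => `[< sep_at T c x y n >])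
                         (let: ex_intro n hn := h in
                          ex_intro _ n (asboolT hn)))
  | right _ => 0
  end.

(* Main.v *)
Require Import Defs.
From HB Require Import structures.
From mathcomp Require Import all_boot all_order all_algebra.
From mathcomp Require Import all_classical all_reals all_analysis.
From mathcomp Require Import zify ring lra.
Import Order.TTheory GRing.Theory Num.Theory.
Local Open Scope ring_scope.

Definition ssq {k : nat} (u : 'rV[int]_k) : int := \sum_(i < k) (u ord0 i) ^+ 2.

Lemma znormE (R : realType) k (u : 'rV[int]_k) :
  znorm R u = Num.sqrt ((ssq u)%:~R).
Proof.
rewrite /znorm /ssq rmorph_sum; congr Num.sqrt; apply: eq_bigr => i _.
by rewrite rmorphXn.
Qed.

Lemma ssq_ge0 k (u : 'rV[int]_k) : 0 <= ssq u.
Proof. by apply: sumr_ge0 => i _; rewrite sqr_ge0. Qed.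

Lemma decomp (R : realType) k (u : 'rV[int]_k) (n : nat) :
  (1 <= n)%N -> znorm R u <= n%:R ->
  exists v w : 'rV[int]_k, u = w + v /\ znorm R v < n%:R /\ znorm R w <= 1.
Proof.
move=> hn hu.
have hn0 : (0 : R) < n%:R by rewrite ltr0n.
have Hsq : (ssq u)%:~R <= (n%:R : R) ^+ 2.
  have h0 : 0 <= znorm R u by rewrite znormE sqrtr_ge0.
  have := ler_pM h0 h0 hu hu; rewrite -!expr2.
  by rewrite znormE sqr_sqrtr // ler0z ssq_ge0.
case: (boolP [exists i, u ord0 i != 0]) => [/existsP [i hi]|hall].
- pose s := Num.sg (u ord0 i).
  pose w : 'rV[int]_k := \row_j (if j == i then s else 0).
  exists (u - w), w; split; first by rewrite addrC subrK.
  split.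
  + have Hv : ssq (u - w) <= ssq u - 1.
      rewrite /ssq (bigD1 i) //= [X in _ <= X - _](bigD1 i) //=.
      rewrite !mxE eqxx.
      have -> : \sum_(j < k | j != i) (u - w) ord0 j ^+ 2
              = \sum_(j < k | j != i) u ord0 j ^+ 2.
        apply: eq_bigr => j hj; rewrite !mxE (negPf hj) subr0 //.
      rewrite /s; move: (\sum_(j < k | j != i) u ord0 j ^+ 2) => S.
      move: (u ord0 i) hi => a hi.
      case: (ltrgtP a 0) hi => h hi //.
      * rewrite ltr0_sg // !expr2; nia.
      * rewrite gtr0_sg // !expr2; nia.
    have Hv' : ((ssq (u - w))%:~R : R) < (n%:R : R) ^+ 2.
      apply: (lt_le_trans _ Hsq); rewrite ltr_int; lia.
    rewrite znormE -(ger0_norm (ltW hn0)) -sqrtr_sqr ltr_sqrt ?exprn_gt0 //.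
  + have Hw : ssq w = 1.
      rewrite /ssq (bigD1 i) //= big1 ?addr0; first by rewrite !mxE eqxx /s sqr_sg hi.
      by move=> j hj; rewrite !mxE (negPf hj) expr0n.
    by rewrite znormE Hw sqrtr1.
- have hz : ssq u = 0.
    rewrite /ssq big1 // => j _.
    move/existsPn: hall => /(_ j); rewrite negbK => /eqP ->; exact: expr0n.
  exists u, 0; split; first by rewrite add0r.
  split; first by rewrite znormE hz sqrtr0.
  rewrite znormE.
  have -> : ssq (0 : 'rV[int]_k) = 0 by rewrite /ssq big1 // => j _; rewrite mxE expr0n.
  by rewrite sqrtr0 ler01.
Qed.

Lemma rho_cases (R : realType) (X : metricType R) (k : nat)
  (T : 'rV[int]_k -> X -> X) (c alpha : R) (x y : X) :
  rho T c alpha x y = 0 \/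
  exists N, sep_at T c x y N /\ rho T c alpha x y = alpha ^- N.
Proof.
rewrite /rho; case: pselect => [h|_]; last by left.
right; case: ex_minnP => m /asboolP Pm _; by exists m.
Qed.

Lemma rho_lb (R : realType) (X : metricType R) (k : nat)
  (T : 'rV[int]_k -> X -> X) (c alpha : R) (x y : X) (M : nat) :
  1 < alpha -> sep_at T c x y M -> alpha ^- M <= rho T c alpha x y.
Proof.
move=> ha hM; rewrite /rho; case: pselect => [h|nh]; last first.
  by exfalso; apply: nh; exists M.
case: ex_minnP => m _ minm.
have hm := minm M (asboolT hM).
have a0 : 0 < alpha by apply: lt_trans ha.
rewrite lef_pV2 ?posrE ?exprn_gt0 //.
by rewrite ler_eXn2l.
Qed.

Theorem lemma4p4 (R : realType) (X : metricType R) (k : nat)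
  (T : 'rV[int]_k -> X -> X) (c : R) (l : nat) (alpha : R) (D : X -> X -> R)
  (hX : compact [set: X]%classic)
  (hT : is_cont_action T)
  (hc : 0 < c)
  (hexp : forall x y : X, x <> y ->
     exists u : 'rV[int]_k, c < mdist (T u x) (T u y))
  (hl : (0 < l)%N)
  (hl2 : forall x y : X, c / 2 <= mdist x y ->
     exists u : 'rV[int]_k, znorm R u <= l%:R /\ c <= mdist (T u x) (T u y))
  (halpha : 1 < alpha) (halpha_l : alpha ^+ l < 2)
  (hD : is_distance D)
  (hDrho : forall x y : X,
     rho T c alpha x y / 4 <= D x y /\ D x y <= rho T c alpha x y)
  (n : nat) (hn : (1 <= n)%N) (x y : X)
  (hmax : forall u : 'rV[int]_k, znorm R u < n%:R ->
     D (T u x) (T u y) < 1 / (4 * alpha)) :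
  D x y < alpha ^- n.
Proof.
have a0 : 0 < alpha by apply: lt_trans halpha.
have an0 : 0 < alpha ^- n by rewrite invr_gt0 exprn_gt0.
rewrite ltNge; apply/negP => H.
have hle := (hDrho x y).2.
case: (@rho_cases R X k T c alpha x y) => [h0|[N [hN hr]]].
  by move: hle; rewrite h0 => hle; have := le_trans H hle; rewrite leNgt an0.
have hNn : (N <= n)%N.
  rewrite leqNgt; apply/negP => hlt.
  have : alpha ^- N < alpha ^- n.
    by rewrite ltf_pV2 ?posrE ?exprn_gt0 // ltr_eXn2l.
  by rewrite -hr ltNge (le_trans H hle).
case: hN => u [hu hcu].
have hun : znorm R u <= n%:R by apply: le_trans hu _; rewrite ler_nat.
have [v [w [huw [hv hw]]]] := @decomp R k u n hn hun.
have := hmax v hv.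
have hsep : sep_at T c (T v x) (T v y) 1.
  by exists w; split => //; rewrite -!hT.2.1 -huw.
have hlb := @rho_lb R X k T c alpha (T v x) (T v y) 1 halpha hsep.
have hD' := (hDrho (T v x) (T v y)).1.
have e : 1 / (4 * alpha) = alpha ^- 1 / 4.
  by rewrite expr1; field; rewrite gt_eqF.
rewrite e => hlt.
have : alpha ^- 1 / 4 <= D (T v x) (T v y).
  apply: le_trans hD'; rewrite ler_pM2r //; lra.
by rewrite leNgt hlt.
Qed.
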